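(* Let $a$ and $q \geq 1$ be integers with $\gcd(a,q) = 1$. Let $n, k, L$ be positive integers and $N \geq 1$ a real number such that $$L \leq N^n, \qquad q \leq L N^k, \qquad 2^{n+k+1} < N.$$ Let $\mathcal{P}$ be the set of primes in $[N/2, N]$ not dividing $q$. Let $m \leq n$ be a positive integer and let $r_1, \dots, r_m$ be positive integers with $r_1 + \cdots + r_m = n$. Then $$\sum_{l = 1}^{L} \left| \sum_{q_1 \in \mathcal{P}} \cdots \sum_{q_m \in \mathcal{P}} e\!\left(\frac{l\, q_1^{r_1} \cdots q_m^{r_m}\, a}{q}\right) \right| \leq C\, 2^{n+k} n^n \max\!\left(L N^{n/2 + k/2},\ \frac{L N^n}{q^{1/2}}\right),$$ where $C>0$ is an absolute constant.
   Context: $e(x) := e^{2\pi i x}$. *)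

(* Defs.v *)
From Stdlib Require Import Reals Lra Lia ZArith Znumtheory List.
Import ListNotations.
Open Scope R_scope.

Definition rsum (xs : list R) : R := fold_right Rplus 0 xs.

(* |sum_{theta in thetas} e(theta)|, with e(x) = exp(2 pi i x) written
   out via its real and imaginary parts cos(2 pi x), sin(2 pi x). *)
Definition abs_exp_sum (thetas : list R) : R :=
  sqrt ( (rsum (map (fun t => cos (2 * PI * t)) thetas)) ^ 2
       + (rsum (map (fun t => sin (2 * PI * t)) thetas)) ^ 2 ).

Fixpoint tuples (P : list nat) (m : nat) : list (list nat) :=
  match m with
  | O => [ [] ]
  | S m' => flat_map (fun p => map (cons p) (tuples P m')) P
  end.

Definition monomial (qs rs : list nat) : Z :=
  fold_right Z.mul 1%Z (map (fun qr => Z.pow (Z.of_nat (fst qr)) (Z.of_nat (snd qr)))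
                            (combine qs rs)).

Definition inner_sum_abs (P : list nat) (rs : list nat) (a q : Z) (l : nat) : R :=
  abs_exp_sum (map (fun qs => IZR (Z.of_nat l * monomial qs rs * a) / IZR q)
                   (tuples P (length rs))).

(* Main.v *)
Require Import Defs.
From Stdlib Require Import Reals Lra Lia Psatz ZArith Znumtheory List Permutation.
Import ListNotations.
Open Scope R_scope.


Lemma rsum_app l1 l2 : rsum (l1 ++ l2) = rsum l1 + rsum l2.
Proof. induction l1; simpl; [ring| rewrite IHl1; ring]. Qed.

Lemma rsum_plus {X} (f g : X -> R) l :
  rsum (map (fun x => f x + g x) l) = rsum (map f l) + rsum (map g l).
Proof. induction l; simpl; [ring| rewrite IHl; ring]. Qed.

Lemma rsum_scal {X} (c : R) (f : X -> R) l :
  rsum (map (fun x => c * f x) l) = c * rsum (map f l).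
Proof. induction l; simpl; [ring| rewrite IHl; ring]. Qed.

Lemma rsum_le {X} (f g : X -> R) l :
  (forall x, In x l -> f x <= g x) -> rsum (map f l) <= rsum (map g l).
Proof. induction l; simpl; intros H; [lra|].
  assert (f a <= g a) by auto. assert (rsum (map f l) <= rsum (map g l)) by auto. lra. Qed.

Lemma rsum_nonneg {X} (f : X -> R) l :
  (forall x, In x l -> 0 <= f x) -> 0 <= rsum (map f l).
Proof. induction l; simpl; intros H; [lra|].
  assert (0 <= f a) by auto. assert (0 <= rsum (map f l)) by auto. lra. Qed.

Lemma rsum_ext {X} (f g : X -> R) l :
  (forall x, In x l -> f x = g x) -> rsum (map f l) = rsum (map g l).
Proof. induction l; simpl; intros H; [lra|]. rewrite H, IHl; auto. Qed.

Lemma rsum_flat_map {X Y} (f : Y -> R) (g : X -> list Y) l :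
  rsum (map f (flat_map g l)) = rsum (map (fun x => rsum (map f (g x))) l).
Proof. induction l; simpl; [reflexivity|]. rewrite map_app, rsum_app, IHl; reflexivity. Qed.

Lemma rsum_exchange {X Y} (f : X -> Y -> R) xs ys :
  rsum (map (fun x => rsum (map (fun y => f x y) ys)) xs) =
  rsum (map (fun y => rsum (map (fun x => f x y) xs)) ys).
Proof. induction xs; simpl.
  - induction ys; simpl; [reflexivity| rewrite <- IHys; ring].
  - rewrite IHxs. rewrite <- rsum_plus. reflexivity. Qed.

Lemma rsum_const {X} (c : R) (l : list X) : rsum (map (fun _ => c) l) = INR (length l) * c.
Proof. induction l; simpl length; [simpl; ring|]. rewrite S_INR. simpl. rewrite IHl. ring. Qed.

Lemma rsum_map {X Y} (f : Y -> R) (g : X -> Y) l : rsum (map f (map g l)) = rsum (map (fun x => f (g x)) l).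
Proof. rewrite map_map. reflexivity. Qed.

Lemma rsum_cons a l : rsum (a :: l) = a + rsum l.
Proof. reflexivity. Qed.

Lemma cauchy_schwarz {X} (f : X -> R) l :
  (rsum (map f l))^2 <= INR (length l) * rsum (map (fun x => (f x)^2) l).
Proof.
  induction l as [|x l IH]; [simpl; lra|].
  replace (INR (length (x::l))) with (INR (length l) + 1) by (simpl length; rewrite S_INR; auto).
  rewrite !map_cons, !rsum_cons. set (S := rsum (map f l)) in *. set (Q := rsum (map (fun x => f x ^2) l)) in *.
  set (n := INR (length l)) in *. assert (0 <= n) by apply pos_INR.
  assert (0 <= Q) by (apply rsum_nonneg; intros; nra).
  destruct (Req_dec n 0) as [Hn|Hn].
  - rewrite Hn in IH. assert (S = 0) by nra. rewrite Hn, H1. nra.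
  - assert (2 * n * f x * S <= n*n*(f x)^2 + n * Q) by (pose proof (pow2_ge_0 (n * f x - S)); nra).
    assert (2 * f x * S <= n * (f x)^2 + Q).
    { apply Rmult_le_reg_l with n; [lra| nra]. }
    nra.
Qed.

Definition cabs (a b : R) : R := sqrt (a ^ 2 + b ^ 2).

Lemma cabs_nonneg a b : 0 <= cabs a b.
Proof. apply sqrt_pos. Qed.

Lemma cabs_sq a b : (cabs a b) ^ 2 = a ^ 2 + b ^ 2.
Proof. unfold cabs. rewrite <- Rsqr_pow2. apply Rsqr_sqrt. nra. Qed.

Lemma le_of_sq x y : 0 <= y -> x ^ 2 <= y ^ 2 -> x <= y.
Proof. intros. apply Rsqr_incr_0_var; auto. unfold Rsqr. nra. Qed.

Lemma cabs_tri2 a b c d : cabs (a + c) (b + d) <= cabs a b + cabs c d.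
Proof.
  pose proof (cabs_nonneg a b). pose proof (cabs_nonneg c d).
  pose proof (cabs_sq a b). pose proof (cabs_sq c d).
  pose proof (cabs_sq (a+c) (b+d)).
  set (x := cabs a b) in *. set (y := cabs c d) in *.
  assert ((a*c+b*d) <= x*y).
  { apply le_of_sq; [nra|].
    assert ((x*y)^2 = (a^2+b^2)*(c^2+d^2)) by (rewrite <- H1, <- H2; ring).
    rewrite H4. pose proof (pow2_ge_0 (a*d-b*c)). nra. }
  apply le_of_sq; [lra|]. rewrite H3. nra.
Qed.

Lemma cabs_tri {X} (re im : X -> R) l :
  cabs (rsum (map re l)) (rsum (map im l)) <= rsum (map (fun x => cabs (re x) (im x)) l).
Proof.
  induction l as [|x l IH].
  - simpl. unfold cabs. replace (0^2+0^2) with 0 by ring. rewrite sqrt_0. lra.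
  - rewrite !map_cons, !rsum_cons. eapply Rle_trans; [apply cabs_tri2|]. lra.
Qed.

Definition Tsum (P : list nat) (rs : list nat) (f : Z -> R) : R :=
  rsum (map (fun x => f (monomial x rs)) (tuples P (length rs))).

Lemma Tsum_ext P rs f g : (forall w, f w = g w) -> Tsum P rs f = Tsum P rs g.
Proof. intros H. unfold Tsum. apply rsum_ext. auto. Qed.

Lemma Tsum_nil P f : Tsum P [] f = f 1%Z.
Proof. unfold Tsum. simpl. unfold monomial. simpl. ring. Qed.

Lemma Tsum_cons P r rs f :
  Tsum P (r :: rs) f =
  rsum (map (fun p => Tsum P rs (fun w => f (Z.pow (Z.of_nat p) (Z.of_nat r) * w)%Z)) P).
Proof.
  unfold Tsum. simpl length. cbn [tuples]. rewrite rsum_flat_map.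
  apply rsum_ext. intros p _. rewrite map_map. reflexivity.
Qed.

Lemma Tsum_perm P rs rs' : Permutation rs rs' -> forall f, Tsum P rs f = Tsum P rs' f.
Proof.
  induction 1; intros f.
  - reflexivity.
  - rewrite !Tsum_cons. apply rsum_ext. intros p _. apply IHPermutation.
  - rewrite !Tsum_cons.
    transitivity (rsum (map (fun p => rsum (map (fun p0 =>
       Tsum P l (fun w => f (Z.of_nat p ^ Z.of_nat y * (Z.of_nat p0 ^ Z.of_nat x * w)))%Z) P)) P)).
    + apply rsum_ext; intros p _. rewrite Tsum_cons. reflexivity.
    + rewrite rsum_exchange. apply rsum_ext; intros p _. rewrite Tsum_cons.
      apply rsum_ext; intros p0 _. apply Tsum_ext. intros w. f_equal. ring.
  - rewrite IHPermutation1. apply IHPermutation2.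
Qed.

Lemma Tsum_app P rs1 rs2 f :
  Tsum P (rs1 ++ rs2) f = Tsum P rs1 (fun w1 => Tsum P rs2 (fun w2 => f (w1 * w2)%Z)).
Proof.
  revert f. induction rs1 as [|r rs1 IH]; intros f.
  - simpl. rewrite Tsum_nil. apply Tsum_ext. intros w. f_equal. ring.
  - simpl app. rewrite !Tsum_cons. apply rsum_ext. intros p _. rewrite IH.
    apply Tsum_ext. intros w. apply Tsum_ext. intros w2. f_equal. ring.
Qed.


Lemma cos_periodZ x m : cos (x + 2 * PI * IZR m) = cos x.
Proof.
  destruct (Z_le_gt_dec 0 m).
  - rewrite <- (Z2Nat.id m) by lia. rewrite <- !INR_IZR_INZ.
    replace (x + 2 * PI * INR (Z.to_nat m)) with (x + 2 * INR (Z.to_nat m) * PI) by ring.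
    apply cos_period.
  - set (n := Z.to_nat (- m)). assert (IZR m = - INR n).
    { unfold n. rewrite INR_IZR_INZ, Z2Nat.id by lia. rewrite opp_IZR. ring. }
    rewrite H. rewrite <- (cos_period (x + 2 * PI * - INR n) n). f_equal. ring.
Qed.

Lemma sin_periodZ x m : sin (x + 2 * PI * IZR m) = sin x.
Proof.
  destruct (Z_le_gt_dec 0 m).
  - rewrite <- (Z2Nat.id m) by lia. rewrite <- !INR_IZR_INZ.
    replace (x + 2 * PI * INR (Z.to_nat m)) with (x + 2 * INR (Z.to_nat m) * PI) by ring.
    apply sin_period.
  - set (n := Z.to_nat (- m)). assert (IZR m = - INR n).
    { unfold n. rewrite INR_IZR_INZ, Z2Nat.id by lia. rewrite opp_IZR. ring. }
    rewrite H. rewrite <- (sin_period (x + 2 * PI * - INR n) n). f_equal. ring.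
Qed.

Lemma telescope (b : R) (Q : nat) :
  2 * sin b * rsum (map (fun t => cos (2 * INR t * b)) (seq 0 Q)) =
  sin ((2 * INR Q - 1) * b) + sin b.
Proof.
  induction Q.
  - simpl. replace ((2*0-1)*b) with (- b) by ring. rewrite sin_neg. ring.
  - rewrite seq_S, map_app, rsum_app. simpl (map _ [_]). rewrite rsum_cons.
    simpl rsum at 2. rewrite Rmult_plus_distr_l, IHQ. rewrite S_INR. simpl (0 + Q)%nat.
    replace ((2 * (INR Q + 1) - 1) * b) with (2 * INR Q * b + b) by ring.
    replace ((2 * INR Q - 1) * b) with (2 * INR Q * b - b) by ring.
    rewrite sin_plus, sin_minus. ring.
Qed.

Lemma orth (h : Z) (Q : nat) : (0 < Q)%nat ->
  rsum (map (fun t => cos (2 * PI * (IZR (Z.of_nat t * h) / INR Q))) (seq 0 Q)) =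
  if Zdivide_dec (Z.of_nat Q) h then INR Q else 0.
Proof.
  intros HQ. assert (0 < INR Q) by (apply lt_0_INR; lia).
  destruct (Zdivide_dec (Z.of_nat Q) h) as [[j Hj]|Hn].
  - rewrite (rsum_ext _ (fun _ => 1)).
    + rewrite rsum_const, length_seq. ring.
    + intros t _. subst h. rewrite mult_IZR, mult_IZR, <- !INR_IZR_INZ.
      replace (2 * PI * (INR t * (IZR j * INR Q) / INR Q))
        with (0 + 2 * PI * IZR (Z.of_nat t * j)) by (rewrite mult_IZR, <- INR_IZR_INZ; field; lra).
      rewrite cos_periodZ. apply cos_0.
  - set (b := PI * IZR h / INR Q).
    assert (Hs : sin b <> 0).
    { intros Hs. apply sin_eq_0_0 in Hs. destruct Hs as [k Hk]. apply Hn.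
      exists k. apply eq_IZR. unfold b in Hk. rewrite mult_IZR, <- !INR_IZR_INZ.
      assert (IZR h = IZR k * INR Q).
      { apply Rmult_eq_reg_l with (PI / INR Q). 2:{ pose proof PI_RGT_0. apply Rgt_not_eq.
          apply Rdiv_lt_0_compat; lra. }
        field_simplify; try lra. }
      exact H0. }
    rewrite (rsum_ext _ (fun t => cos (2 * INR t * b))).
    + apply Rmult_eq_reg_l with (2 * sin b); [|intro; apply Hs; lra].
      rewrite telescope. rewrite Rmult_0_r.
      replace ((2 * INR Q - 1) * b) with (- b + 2 * PI * IZR h) by (unfold b; field; lra).
      rewrite sin_periodZ, sin_neg. ring.
    + intros t _. f_equal. unfold b. rewrite mult_IZR, <- !INR_IZR_INZ. field. lra.
Qed.


Lemma rsum_filter_split {X} (F : X -> R) (p : X -> bool) l :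
  rsum (map F l) = rsum (map F (filter p l)) + rsum (map F (filter (fun x => negb (p x)) l)).
Proof. induction l; simpl; [ring|]. destruct (p a); simpl; rewrite IHl; ring. Qed.

Lemma rsum_all_eq {X} (F : X -> R) l w0 :
  (forall x, In x l -> x = w0) -> rsum (map F l) = INR (length l) * F w0.
Proof. intros H. rewrite (rsum_ext _ (fun _ => F w0)). apply rsum_const.
  intros x Hx. rewrite (H x Hx). reflexivity. Qed.

Lemma filter_filter_le {X} (f g : X -> bool) l :
  (length (filter f (filter g l)) <= length (filter f l))%nat.
Proof. induction l; simpl; auto. destruct (g a); simpl; destruct (f a); simpl; lia. Qed.

Lemma mult_bound (F : Z -> R) (ws us : list Z) (K : nat) :
  (forall x, 0 <= F x) -> NoDup ws -> (forall u, In u us -> In u ws) ->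
  (forall w, (length (filter (Z.eqb w) us) <= K)%nat) ->
  rsum (map F us) <= INR K * rsum (map F ws).
Proof.
  intros HF. revert us. induction ws as [|w0 ws IH]; intros us Hnd Hin HK.
  - destruct us as [|u us]; [simpl; lra|]. exfalso. apply (Hin u). left; auto.
  - inversion Hnd; subst.
    rewrite (rsum_filter_split F (Z.eqb w0)). rewrite map_cons, rsum_cons.
    rewrite (rsum_all_eq F _ w0).
    2:{ intros x Hx. apply filter_In in Hx. destruct Hx. symmetry. apply Z.eqb_eq. auto. }
    assert (INR (length (filter (Z.eqb w0) us)) <= INR K) by (apply le_INR; auto).
    assert (rsum (map F (filter (fun x => negb (Z.eqb w0 x)) us)) <= INR K * rsum (map F ws)).
    { apply IH; auto.
      - intros u Hu. apply filter_In in Hu. destruct Hu as [Hu Hne].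
        destruct (Hin u Hu); auto. subst. rewrite Z.eqb_refl in Hne. discriminate.
      - intros w. eapply Nat.le_trans; [apply filter_filter_le| auto]. }
    pose proof (HF w0). pose proof (pos_INR (length (filter (Z.eqb w0) us))). nra.
Qed.

Lemma block_shift (F : Z -> R) (Q : nat) :
  (forall t, F (t + Z.of_nat Q)%Z = F t) ->
  forall s, rsum (map (fun t => F (Z.of_nat t)) (seq s Q)) = rsum (map (fun t => F (Z.of_nat t)) (seq 0 Q)).
Proof.
  intros HP s. induction s; auto. rewrite <- IHs. destruct Q as [|m]; auto.
  rewrite seq_S. cbn [seq]. rewrite map_app, rsum_app. rewrite !map_cons, !rsum_cons.
  replace (Z.of_nat (S s + m)) with (Z.of_nat s + Z.of_nat (S m))%Z by lia.
  rewrite HP. cbn [map rsum fold_right]. unfold rsum. simpl fold_right. ring.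
Qed.

Lemma blocks (F : Z -> R) (Q : nat) :
  (forall t, F (t + Z.of_nat Q)%Z = F t) ->
  forall j s, rsum (map (fun t => F (Z.of_nat t)) (seq s (j * Q))) =
    INR j * rsum (map (fun t => F (Z.of_nat t)) (seq 0 Q)).
Proof.
  intros HP j. induction j; intros s; [simpl; ring|].
  replace (S j * Q)%nat with (Q + j * Q)%nat by lia. rewrite seq_app, map_app, rsum_app.
  rewrite IHj, block_shift by auto. rewrite S_INR. ring.
Qed.

Lemma periodic_bound (F : Z -> R) (Q R0 : nat) :
  (0 < Q)%nat -> (forall x, 0 <= F x) -> (forall t, F (t + Z.of_nat Q)%Z = F t) ->
  rsum (map (fun t => F (Z.of_nat t)) (seq 1 R0)) <=
  (INR R0 / INR Q + 1) * rsum (map (fun t => F (Z.of_nat t)) (seq 0 Q)).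
Proof.
  intros HQ HF HP. set (j := (R0 / Q + 1)%nat).
  assert (Hj : (R0 <= j * Q)%nat).
  { unfold j. pose proof (Nat.div_mod R0 Q). pose proof (Nat.mod_upper_bound R0 Q). nia. }
  assert (HjR : INR j <= INR R0 / INR Q + 1).
  { unfold j. rewrite plus_INR. simpl (INR 1). apply Rplus_le_compat_r.
    assert (0 < INR Q) by (apply lt_0_INR; lia).
    apply Rmult_le_reg_r with (INR Q); auto. unfold Rdiv. rewrite Rmult_assoc, Rinv_l by lra.
    rewrite Rmult_1_r, <- mult_INR. apply le_INR. rewrite Nat.mul_comm. apply Nat.Div0.mul_div_le. }
  assert (0 <= rsum (map (fun t => F (Z.of_nat t)) (seq 0 Q))) by (apply rsum_nonneg; auto).
  eapply Rle_trans with (rsum (map (fun t => F (Z.of_nat t)) (seq 1 (j * Q)))).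
  - replace (j * Q)%nat with (R0 + (j * Q - R0))%nat by lia.
    rewrite seq_app, map_app, rsum_app.
    assert (0 <= rsum (map (fun t => F (Z.of_nat t)) (seq (1 + R0) (j * Q - R0)))) by (apply rsum_nonneg; auto).
    lra.
  - rewrite blocks by auto. nra.
Qed.

Lemma rsum_ind {X} (D : X -> bool) l :
  rsum (map (fun t => if D t then 1 else 0) l) = INR (length (filter D l)).
Proof. induction l; simpl; [auto|]. destruct (D a); simpl length; rewrite ?S_INR, IHl; simpl; ring. Qed.

Lemma nodup_all_eq_len {X} (l : list X) x0 :
  NoDup l -> (forall x, In x l -> x = x0) -> (length l <= 1)%nat.
Proof.
  intros Hn H. destruct l as [|a [|b l]]; simpl; try lia.
  inversion Hn; subst. exfalso. apply H2. left. rewrite (H a), (H b); simpl; auto.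
Qed.

Lemma indicator_sum (Q : nat) (c : Z) :
  (0 < Q)%nat ->
  rsum (map (fun t => if Zdivide_dec (Z.of_nat Q) (Z.of_nat t - c) then 1 else 0) (seq 0 Q)) <= 1.
Proof.
  intros HQ.
  rewrite (rsum_ext _ (fun t => if (fun t => if Zdivide_dec (Z.of_nat Q) (Z.of_nat t - c) then true else false) t then 1 else 0)).
  2:{ intros t _. destruct (Zdivide_dec (Z.of_nat Q) (Z.of_nat t - c)); reflexivity. }
  rewrite rsum_ind.
  - replace 1 with (INR 1) by reflexivity. apply le_INR.
    apply (nodup_all_eq_len _ (Z.to_nat (c mod Z.of_nat Q))).
    + apply NoDup_filter, seq_NoDup.
    + intros t Ht. apply filter_In in Ht. destruct Ht as [Ht Hd].
      apply in_seq in Ht. destruct (Zdivide_dec (Z.of_nat Q) (Z.of_nat t - c)) as [[k Hk]|]; [|discriminate].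
      apply Nat2Z.inj. rewrite Z2Nat.id by (apply Z.mod_pos_bound; lia).
      assert (Z.of_nat t = (c + k * Z.of_nat Q) mod Z.of_nat Q)%Z as ->.
      { rewrite <- (Z.mod_small (Z.of_nat t) (Z.of_nat Q)) by lia. f_equal. lia. }
      rewrite Z.mod_add by lia. reflexivity.
Qed.


Lemma rsum_sq {X} (f : X -> R) l :
  (rsum (map f l)) ^ 2 = rsum (map (fun x => rsum (map (fun y => f x * f y) l)) l).
Proof.
  rewrite (rsum_ext (fun x => rsum (map (fun y => f x * f y) l)) (fun x => f x * rsum (map f l))).
  - rewrite (rsum_ext (fun x => f x * rsum (map f l)) (fun x => rsum (map f l) * f x)).
    + rewrite rsum_scal. ring.
    + intros; ring.
  - intros x _. apply rsum_scal.
Qed.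

Lemma expand_sq {X} (th : X -> R) l :
  (rsum (map (fun x => cos (th x)) l)) ^ 2 + (rsum (map (fun x => sin (th x)) l)) ^ 2 =
  rsum (map (fun x => rsum (map (fun y => cos (th x - th y)) l)) l).
Proof.
  rewrite !rsum_sq. rewrite <- rsum_plus. apply rsum_ext. intros x _.
  rewrite <- rsum_plus. apply rsum_ext. intros y _. rewrite cos_minus. ring.
Qed.

Lemma nodup_seqZ a n : NoDup (map Z.of_nat (seq a n)).
Proof. apply NoDup_map_NoDup_ForallPairs; [|apply seq_NoDup]. intros x y _ _ H. lia. Qed.

Lemma in_seqZ u R0 : (1 <= u <= Z.of_nat R0)%Z -> In u (map Z.of_nat (seq 1 R0)).
Proof. intros H. apply in_map_iff. exists (Z.to_nat u). split; [lia|]. apply in_seq. lia. Qed.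

Section Bil.
Variable (Q : nat) (c : Z).
Hypothesis HQ : (0 < Q)%nat.
Hypothesis Hc : rel_prime c (Z.of_nat Q).

Definition ang (u v : Z) : R := 2 * PI * (IZR (u * v * c) / INR Q).

Definition Fv (vs : list Z) (t : Z) : R :=
  cabs (rsum (map (fun v => cos (ang t v)) vs)) (rsum (map (fun v => sin (ang t v)) vs)) ^ 2.

Lemma ang_period t v : ang (t + Z.of_nat Q) v = ang t v + 2 * PI * IZR (v * c).
Proof. unfold ang. assert (0 < INR Q) by (apply lt_0_INR; lia).
  replace ((t + Z.of_nat Q) * v * c)%Z with (t * v * c + Z.of_nat Q * (v * c))%Z by ring.
  rewrite plus_IZR, !mult_IZR, <- INR_IZR_INZ. field. lra. Qed.

Lemma Fv_period vs t : Fv vs (t + Z.of_nat Q) = Fv vs t.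
Proof. unfold Fv. f_equal. f_equal; apply rsum_ext; intros v _; rewrite ang_period.
  apply cos_periodZ. apply sin_periodZ. Qed.

Lemma Fv_nonneg vs t : 0 <= Fv vs t.
Proof. unfold Fv. pose proof (cabs_nonneg (rsum (map (fun v => cos (ang t v)) vs)) (rsum (map (fun v => sin (ang t v)) vs))). nra. Qed.

Definition ind (v : Z) (w : Z) : R := if Zdivide_dec (Z.of_nat Q) (w - v) then 1 else 0.

Lemma ind_nonneg v w : 0 <= ind v w.
Proof. unfold ind. destruct Zdivide_dec; lra. Qed.

Lemma ind_period v t : ind v (t + Z.of_nat Q) = ind v t.
Proof. unfold ind. destruct (Zdivide_dec (Z.of_nat Q) (t + Z.of_nat Q - v)) as [[k Hk]|H1];
  destruct (Zdivide_dec (Z.of_nat Q) (t - v)) as [[k' Hk']|H2]; auto.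
  - exfalso. apply H2. exists (k - 1)%Z. lia.
  - exfalso. apply H1. exists (k' + 1)%Z. lia. Qed.

Lemma count_bound (vs : list Z) (Rv Kv : nat) (v : Z) :
  (forall x, In x vs -> (1 <= x <= Z.of_nat Rv)%Z) ->
  (forall w, (length (filter (Z.eqb w) vs) <= Kv)%nat) ->
  rsum (map (ind v) vs) <= INR Kv * (INR Rv / INR Q + 1).
Proof.
  intros Hr HK.
  eapply Rle_trans. { apply (mult_bound (ind v) (map Z.of_nat (seq 1 Rv)) vs Kv); auto.
    - apply ind_nonneg. - apply nodup_seqZ. - intros u Hu. apply in_seqZ. auto. }
  rewrite map_map. apply Rmult_le_compat_l; [apply pos_INR|].
  eapply Rle_trans. { apply (periodic_bound (ind v) Q Rv); auto. apply ind_nonneg. apply ind_period. }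
  assert (0 <= INR Rv / INR Q + 1).
  { assert (0 < INR Q) by (apply lt_0_INR; lia). pose proof (pos_INR Rv).
    assert (0 <= INR Rv / INR Q) by (unfold Rdiv; apply Rmult_le_pos; [lra| left; apply Rinv_0_lt_compat; lra]). lra. }
  pose proof (indicator_sum Q v HQ). unfold ind. nra.
Qed.

Lemma complete_sum (vs : list Z) (Rv Kv : nat) :
  (forall x, In x vs -> (1 <= x <= Z.of_nat Rv)%Z) ->
  (forall w, (length (filter (Z.eqb w) vs) <= Kv)%nat) ->
  rsum (map (fun t => Fv vs (Z.of_nat t)) (seq 0 Q)) <=
  INR (length vs) * INR Q * (INR Kv * (INR Rv / INR Q + 1)).
Proof.
  intros Hr HK.
  unfold Fv. rewrite (rsum_ext _ (fun t => rsum (map (fun x => rsum (map (fun y =>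
     cos (2 * PI * (IZR (Z.of_nat t * ((x - y) * c)) / INR Q))) vs)) vs))).
  2:{ intros t _. rewrite cabs_sq, expand_sq. apply rsum_ext; intros x _. apply rsum_ext; intros y _.
      f_equal. unfold ang. assert (0 < INR Q) by (apply lt_0_INR; lia).
      rewrite !mult_IZR, minus_IZR. field. lra. }
  rewrite rsum_exchange.
  rewrite (rsum_ext _ (fun x => rsum (map (fun y => rsum (map (fun t =>
     cos (2 * PI * (IZR (Z.of_nat t * ((x - y) * c)) / INR Q))) (seq 0 Q))) vs))).
  2:{ intros x _. apply rsum_exchange. }
  rewrite (rsum_ext _ (fun x => rsum (map (fun y => INR Q * ind x y) vs))).
  2:{ intros x _. apply rsum_ext. intros y _. rewrite orth by auto. unfold ind.
      destruct (Zdivide_dec (Z.of_nat Q) ((x - y) * c)) as [H1|H1];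
      destruct (Zdivide_dec (Z.of_nat Q) (y - x)) as [H2|H2]; try ring.
      - exfalso. apply H2. rewrite Z.mul_comm in H1. apply Gauss in H1; [|apply rel_prime_sym; auto].
        destruct H1 as [k Hk]. exists (- k)%Z. lia.
      - exfalso. apply H1. destruct H2 as [k Hk]. exists (- k * c)%Z. lia. }
  rewrite (rsum_ext _ (fun x => INR Q * rsum (map (ind x) vs))).
  2:{ intros x _. apply rsum_scal. }
  rewrite rsum_scal.
  eapply Rle_trans. { apply Rmult_le_compat_l. apply pos_INR.
    apply (rsum_le _ (fun _ => INR Kv * (INR Rv / INR Q + 1))). intros x _.
    apply (count_bound vs Rv Kv x); auto. }
  rewrite rsum_const. lra.
Qed.

Definition BL (us vs : list Z) : R :=
  rsum (map (fun u => cabs (rsum (map (fun v => cos (ang u v)) vs)) (rsum (map (fun v => sin (ang u v)) vs))) us).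

Lemma bilinear (us vs : list Z) (Ru Rv Ku Kv : nat) :
  (forall x, In x us -> (1 <= x <= Z.of_nat Ru)%Z) ->
  (forall w, (length (filter (Z.eqb w) us) <= Ku)%nat) ->
  (forall x, In x vs -> (1 <= x <= Z.of_nat Rv)%Z) ->
  (forall w, (length (filter (Z.eqb w) vs) <= Kv)%nat) ->
  BL us vs <= sqrt (INR (length us) * (INR Ku * (INR Ru / INR Q + 1)) *
                    (INR (length vs) * INR Q * (INR Kv * (INR Rv / INR Q + 1)))).
Proof.
  intros Hu HKu Hv HKv.
  assert (HB : 0 <= BL us vs) by (apply rsum_nonneg; intros; apply cabs_nonneg).
  rewrite <- (sqrt_pow2 (BL us vs)) by auto. apply sqrt_le_1_alt.
  eapply Rle_trans. { apply cauchy_schwarz. }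
  rewrite Rmult_assoc. apply Rmult_le_compat_l. apply pos_INR.
  change (rsum (map (fun x => Fv vs x) us) <= INR Ku * (INR Ru / INR Q + 1) *
    (INR (length vs) * INR Q * (INR Kv * (INR Rv / INR Q + 1)))).
  eapply Rle_trans. { apply (mult_bound (Fv vs) (map Z.of_nat (seq 1 Ru)) us Ku); auto.
    - apply Fv_nonneg. - apply nodup_seqZ. - intros u Hu'. apply in_seqZ. auto. }
  rewrite map_map, Rmult_assoc. apply Rmult_le_compat_l; [apply pos_INR|].
  eapply Rle_trans. { apply (periodic_bound (Fv vs) Q Ru); auto. apply Fv_nonneg. apply Fv_period. }
  apply Rmult_le_compat_l.
  { assert (0 < INR Q) by (apply lt_0_INR; lia). pose proof (pos_INR Ru).
    assert (0 <= INR Ru / INR Q) by (unfold Rdiv; apply Rmult_le_pos; [lra| left; apply Rinv_0_lt_compat; lra]). lra. }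
  apply (complete_sum vs Rv Kv); auto.
Qed.

End Bil.

Open Scope Z_scope.


Lemma in_tuples (P : list nat) m x :
  In x (tuples P m) <-> (length x = m /\ forall p, In p x -> In p P).
Proof.
  revert x. induction m; intros x; simpl.
  - split. + intros [<-|[]]. simpl. split; auto. intros p []. 
    + intros [H _]. destruct x; [auto|discriminate].
  - rewrite in_flat_map. split.
    + intros [p [Hp Hx]]. apply in_map_iff in Hx. destruct Hx as [y [<- Hy]].
      apply IHm in Hy. destruct Hy as [Hl Hy]. simpl. split; [lia|].
      intros p0 [<-|H]; auto.
    + intros [Hl H]. destruct x as [|p y]; [discriminate|]. exists p. split; [apply H; left; auto|].
      apply in_map. apply IHm. simpl in Hl. split; [lia|]. intros p0 Hp0. apply H. right; auto.
Qed.

Lemma length_tuples (P : list nat) m : length (tuples P m) = (length P ^ m)%nat.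
Proof.
  induction m; simpl; auto. rewrite <- IHm.
  assert (forall (T : list (list nat)) (P' : list nat),
    length (flat_map (fun p => map (cons p) T) P') = (length P' * length T)%nat).
  { intros T P'. induction P'; simpl; auto. rewrite length_app, length_map, IHP'. lia. }
  rewrite H. lia.
Qed.

Lemma nodup_fm (T : list (list nat)) (P : list nat) :
  NoDup T -> NoDup P -> NoDup (flat_map (fun p => map (cons p) T) P).
Proof.
  intros HT. induction P as [|p P' IHP]; intros HP; simpl; [constructor|]. inversion HP; subst.
  apply NoDup_app.
  - apply NoDup_map_NoDup_ForallPairs; auto. intros x y _ _ H. inversion H; auto.
  - auto.
  - intros x Hx Hx'. apply in_map_iff in Hx. destruct Hx as [y [<- _]].
    apply in_flat_map in Hx'. destruct Hx' as [p' [Hp' Hy]]. apply in_map_iff in Hy.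
    destruct Hy as [z [Hz _]]. inversion Hz; subst. auto.
Qed.

Lemma nodup_tuples (P : list nat) m : NoDup P -> NoDup (tuples P m).
Proof.
  intros HP. induction m; simpl. { constructor; [intros []|constructor]. }
  apply nodup_fm; auto.
Qed.

Definition zprod (x : list nat) : Z := fold_right Z.mul 1 (map Z.of_nat x).

Lemma mono_ones x b : length x = b -> monomial x (repeat 1%nat b) = zprod x.
Proof.
  revert b. induction x as [|p x IH]; intros b Hb; simpl in Hb; subst; [reflexivity|].
  unfold monomial, zprod in *. simpl. rewrite IH by auto. f_equal. apply Z.pow_1_r.
Qed.

Lemma prime_div_zprod p x : prime p -> (forall j, In j x -> prime (Z.of_nat j)) ->
  (p | zprod x) -> exists j, In j x /\ p = Z.of_nat j.
Proof.
  intros Hp. induction x as [|j x IH]; intros Hx Hd; unfold zprod in *; simpl in *.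
  - apply Z.divide_1_r in Hd. pose proof (prime_ge_2 p Hp). lia.
  - apply prime_mult in Hd; auto. destruct Hd as [Hd|Hd].
    + exists j. split; auto. apply prime_div_prime; auto.
    + destruct IH as [j' [H1 H2]]; auto. exists j'. auto.
Qed.

Lemma mul_div_relprime a b w : rel_prime a b -> (a | w) -> (b | w) -> (a * b | w).
Proof.
  intros Hr [k Hk] Hb. subst w. assert (b | k).
  { apply Gauss with a. rewrite Z.mul_comm. auto. apply rel_prime_sym; auto. }
  destruct H as [j ->]. exists j. ring.
Qed.

Lemma zprod_div S w : NoDup S -> (forall p, In p S -> prime (Z.of_nat p) /\ (Z.of_nat p | w)) ->
  (zprod S | w).
Proof.
  induction S as [|p S IH]; intros Hn H; unfold zprod in *; simpl.
  - apply Z.divide_1_l.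
  - inversion Hn; subst. destruct (H p (or_introl eq_refl)) as [Hp Hpw].
    apply mul_div_relprime; auto.
    + apply prime_rel_prime; auto. intros Hd. apply prime_div_zprod in Hd; auto.
      * destruct Hd as [j [Hj Hpj]]. apply Nat2Z.inj in Hpj. subst. auto.
      * intros j Hj. apply H. right. auto.
    + apply IH; auto. intros; apply H; right; auto.
Qed.

Lemma relprime_pow p r q : rel_prime p q -> rel_prime (p ^ Z.of_nat r) q.
Proof.
  intros H. apply rel_prime_sym. induction r.
  - simpl. apply rel_prime_sym, rel_prime_1.
  - rewrite Nat2Z.inj_succ, Z.pow_succ_r by lia. apply rel_prime_mult; auto. apply rel_prime_sym; auto.
Qed.

Lemma relprime_mono x rs q : (forall p, In p x -> prime (Z.of_nat p) /\ ~ (Z.of_nat p | q)) ->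
  rel_prime (monomial x rs) q.
Proof.
  revert rs. induction x as [|p x IH]; intros rs H; destruct rs as [|r rs]; unfold monomial; simpl;
    try apply rel_prime_1.
  apply rel_prime_sym. apply rel_prime_mult; apply rel_prime_sym.
  - apply relprime_pow. destruct (H p (or_introl eq_refl)). apply prime_rel_prime; auto.
  - apply IH. intros; apply H; right; auto.
Qed.

Lemma zprod_bounds x B : (forall p, In p x -> (1 <= p <= B)%nat) ->
  1 <= zprod x <= Z.of_nat B ^ Z.of_nat (length x).
Proof.
  induction x as [|p x IH]; intros H; unfold zprod in *.
  - simpl. lia.
  - cbn [length map fold_right]. rewrite Nat2Z.inj_succ, Z.pow_succ_r by lia. destruct (H p (or_introl eq_refl)).
    destruct IH as [I1 I2]. { intros; apply H; right; auto. } nia.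
Qed.

Lemma filter_map_len {X Y} (f : Y -> bool) (g : X -> Y) l :
  length (filter f (map g l)) = length (filter (fun x => f (g x)) l).
Proof. induction l; simpl; auto. destruct (f (g a)); simpl; auto. Qed.

Lemma in_div_zprod j y : In j y -> (Z.of_nat j | zprod y).
Proof. induction y as [|k y IH]; intros H; unfold zprod in *; simpl in *; [destruct H|].
  destruct H as [<-|H]. - apply Z.divide_factor_l. - apply Z.divide_mul_r. auto. Qed.

Lemma nodup_all_eq_lenN {X} (l : list X) x0 :
  NoDup l -> (forall x, In x l -> x = x0) -> (length l <= 1)%nat.
Proof.
  intros Hn H. destruct l as [|a [|b l]]; simpl; try lia.
  inversion Hn; subst. exfalso. apply H2. left. rewrite (H a), (H b); simpl; auto.
Qed.

Lemma Kv_bound (P : list nat) b w : NoDup P -> (forall p, In p P -> prime (Z.of_nat p)) ->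
  (length (filter (Z.eqb w) (map zprod (tuples P b))) <= b ^ b)%nat.
Proof.
  intros HP Hpr. rewrite filter_map_len.
  set (Fl := filter (fun x => Z.eqb w (zprod x)) (tuples P b)).
  destruct Fl as [|x0 rest] eqn:HF; [simpl; lia|].
  assert (Hx0 : In x0 Fl) by (rewrite HF; left; auto).
  unfold Fl in Hx0. apply filter_In in Hx0. destruct Hx0 as [Hx0 Hw0].
  apply Z.eqb_eq in Hw0. apply in_tuples in Hx0. destruct Hx0 as [Hl0 Hc0].
  rewrite <- HF. replace (b ^ b)%nat with (length (tuples x0 b)) by (rewrite length_tuples, Hl0; auto).
  apply NoDup_incl_length.
  - apply NoDup_filter, nodup_tuples; auto.
  - intros y Hy. apply filter_In in Hy. destruct Hy as [Hy Hw]. apply Z.eqb_eq in Hw.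
    apply in_tuples in Hy. destruct Hy as [Hl Hc]. apply in_tuples. split; [lia|].
    intros j Hj. assert (Hd : (Z.of_nat j | zprod x0)).
    { rewrite <- Hw0, Hw. apply in_div_zprod; auto. }
    apply prime_div_zprod in Hd.
    + destruct Hd as [j' [Hj' E]]. apply Nat2Z.inj in E. subst. auto.
    + apply Hpr, Hc. auto.
    + intros k Hk. apply Hpr. apply Hc0. auto.
Qed.

Lemma flat_filter_bound {X} (G : X -> list Z) (D : X -> bool) w T :
  (forall x, In x T -> (length (filter (Z.eqb w) (G x)) <= if D x then 1 else 0)%nat) ->
  (length (filter (Z.eqb w) (flat_map G T)) <= length (filter D T))%nat.
Proof.
  intros H. induction T as [|x T IH]; simpl; auto.
  rewrite filter_app, length_app.
  assert (length (filter (Z.eqb w) (flat_map G T)) <= length (filter D T))%nat by (apply IH; intros y Hy; apply H; right; auto).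
  specialize (H x (or_introl eq_refl)).
  destruct (D x); simpl; lia.
Qed.

Lemma Ku_bound (P : list nat) a L w : NoDup P -> (forall p, In p P -> prime (Z.of_nat p)) ->
  (length (filter (Z.eqb w) (flat_map (fun x => map (fun l => (Z.of_nat l * zprod x)%Z) (seq 1 L)) (tuples P a)))
    <= length (filter (fun p => if Zdivide_dec (Z.of_nat p) w then true else false) P) ^ a)%nat.
Proof.
  intros HP Hpr.
  eapply Nat.le_trans.
  { apply (flat_filter_bound _ (fun x => if Zdivide_dec (zprod x) w then true else false)).
    intros x Hx. apply in_tuples in Hx. destruct Hx as [_ Hx].
    assert (Hz : 1 <= zprod x).
    { clear -Hx Hpr. induction x as [|p x IH]; unfold zprod in *; simpl; [lia|].
      assert (2 <= Z.of_nat p) by (apply prime_ge_2, Hpr, Hx; left; auto).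
      assert (1 <= fold_right Z.mul 1 (map Z.of_nat x)) by (apply IH; intros; apply Hx; right; auto). nia. }
    rewrite filter_map_len.
    destruct (Zdivide_dec (zprod x) w) as [Hd|Hd].
    - apply (nodup_all_eq_lenN _ (Z.to_nat (w / zprod x))).
      + apply NoDup_filter, seq_NoDup.
      + intros l Hl. apply filter_In in Hl. destruct Hl as [Hl He]. apply Z.eqb_eq in He.
        apply in_seq in Hl. rewrite He, Z.div_mul by lia. lia.
    - assert (forall l0, In l0 (seq 1 L) -> Z.eqb w (Z.of_nat l0 * zprod x) = false).
      { intros l0 _. apply Z.eqb_neq. intros E. apply Hd. exists (Z.of_nat l0). lia. }
      clear -H. induction (seq 1 L); simpl; auto. rewrite H by (left; auto). apply IHl. intros; apply H; right; auto. }
  replace (length (filter (fun p => if Zdivide_dec (Z.of_nat p) w then true else false) P) ^ a)%nat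
    with (length (tuples (filter (fun p => if Zdivide_dec (Z.of_nat p) w then true else false) P) a))
    by apply length_tuples.
  apply NoDup_incl_length.
  - apply NoDup_filter, nodup_tuples; auto.
  - intros y Hy. apply filter_In in Hy. destruct Hy as [Hy Hd].
    destruct (Zdivide_dec (zprod y) w) as [Hd'|]; [|discriminate].
    apply in_tuples in Hy. destruct Hy as [Hl Hc]. apply in_tuples. split; auto.
    intros j Hj. apply filter_In. split; auto.
    destruct (Zdivide_dec (Z.of_nat j) w) as [|Hn]; auto. exfalso. apply Hn.
    eapply Z.divide_trans; [apply in_div_zprod; eauto| auto].
Qed.

Open Scope R_scope.


Lemma Y_bound (N Ln qR : R) (n k s c ka b : nat) :
  1 <= N -> 1 <= Ln -> 1 <= qR -> qR <= Ln * N ^ k -> ka = Nat.min k s -> b = (s - ka)%nat ->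
  (2 * c + s <= n)%nat ->
  N ^ (2 * c + s) * Ln * ((Ln * N ^ ka + qR) * (N ^ b + qR) / qR)
   <= 4 * (Ln ^ 2 * Rmax (N ^ (n + k)) (N ^ (2 * n) / qR)).
Proof.
  intros HN HL Hq HqL Hka Hb Hc.
  set (M := Rmax (N ^ (n + k)) (N ^ (2 * n) / qR)).
  assert (M1 : N ^ (n + k) <= M) by apply Rmax_l.
  assert (M2 : N ^ (2 * n) / qR <= M) by apply Rmax_r.
  assert (PL : forall m m', (m <= m')%nat -> N ^ m <= N ^ m') by (intros; apply Rle_pow; auto).
  assert (Pp : forall m, 0 < N ^ m) by (intros; apply pow_lt; lra).
  assert (E : N ^ (2 * c + s) * Ln * ((Ln * N ^ ka + qR) * (N ^ b + qR) / qR) =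
     Ln ^ 2 * (N ^ (2 * c + s + ka + b) / qR) + Ln ^ 2 * N ^ (2 * c + s + ka)
     + Ln * N ^ (2 * c + s + b) + Ln * qR * N ^ (2 * c + s)).
  { rewrite !pow_add. field. lra. }
  rewrite E.
  assert (T1 : Ln ^ 2 * (N ^ (2 * c + s + ka + b) / qR) <= Ln ^ 2 * M).
  { apply Rmult_le_compat_l; [nra|]. eapply Rle_trans; [|apply M2].
    unfold Rdiv. apply Rmult_le_compat_r. left; apply Rinv_0_lt_compat; lra. apply PL. lia. }
  assert (T2 : Ln ^ 2 * N ^ (2 * c + s + ka) <= Ln ^ 2 * M).
  { apply Rmult_le_compat_l; [nra|]. eapply Rle_trans; [|apply M1]. apply PL. lia. }
  assert (T4 : Ln * qR * N ^ (2 * c + s) <= Ln ^ 2 * M).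
  { assert (Ln * qR * N ^ (2 * c + s) <= Ln * (Ln * N ^ k) * N ^ (2 * c + s)).
    { apply Rmult_le_compat_r; [left; auto|]. apply Rmult_le_compat_l; lra. }
    eapply Rle_trans; [apply H|].
    replace (Ln * (Ln * N ^ k) * N ^ (2 * c + s)) with (Ln ^ 2 * N ^ (2 * c + s + k)) by (rewrite pow_add; ring).
    apply Rmult_le_compat_l; [nra|]. eapply Rle_trans; [|apply M1]. apply PL. lia. }
  assert (T3 : Ln * N ^ (2 * c + s + b) <= Ln ^ 2 * M).
  { destruct (Nat.eq_dec b 0) as [Hb0|Hb0].
    - rewrite Hb0. assert (Ln * N ^ (2 * c + s + 0) <= Ln ^ 2 * N ^ (n + k)).
      { assert (N ^ (2 * c + s + 0) <= N ^ (n + k)) by (apply PL; lia).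
        assert (0 < N ^ (n + k)) by auto.
        apply Rle_trans with (Ln * N ^ (n + k)); [apply Rmult_le_compat_l; lra|].
        apply Rmult_le_compat_r; [lra|]. nra. }
      assert (0 <= Ln ^ 2) by nra. nra.
    - assert (Hk : (ka = k /\ k < s)%nat) by lia.
      assert (Ln * N ^ (2 * c + s + b) <= Ln * N ^ (2 * n - k)).
      { apply Rmult_le_compat_l; [lra|]. apply PL. lia. }
      eapply Rle_trans; [apply H|].
      assert (Ln * N ^ (2 * n - k) <= Ln ^ 2 * (N ^ (2 * n) / qR)).
      { replace (N ^ (2 * n)) with (N ^ (2 * n - k) * N ^ k) by (rewrite <- pow_add; f_equal; lia).
        assert (0 < N ^ (2 * n - k)) by auto.
        apply Rmult_le_reg_r with qR; [lra|]. field_simplify; [|lra]. replace (Ln ^ 2 * N ^ (2 * n - k) * N ^ k) with (Ln * N ^ (2 * n - k) * (Ln * N ^ k)) by ring. apply Rmult_le_compat_l; [|auto]. apply Rmult_le_pos; lra. }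
      eapply Rle_trans; [apply H0|]. apply Rmult_le_compat_l; [nra|auto]. }
  lra.
Qed.

Lemma sqrt_pow_Rpower (N : R) (n k : nat) : 0 < N ->
  sqrt (N ^ (n + k)) = Rpower N (INR n / 2 + INR k / 2).
Proof.
  intros HN. apply sqrt_lem_1.
  - apply pow_le; lra.
  - unfold Rpower. left; apply exp_pos.
  - rewrite <- Rpower_plus. rewrite <- Rpower_pow by auto. f_equal. rewrite plus_INR. field.
Qed.

Lemma final_real (N Ln qR Pn Bn Ku Kv Cst : R) (n k s c ka b : nat) :
  1 <= N -> 1 <= Ln -> 1 <= qR -> qR <= Ln * N ^ k -> ka = Nat.min k s -> b = (s - ka)%nat ->
  (2 * c + s <= n)%nat -> 0 <= Pn <= N -> 0 <= Bn <= N -> 0 <= Ku -> 0 <= Kv ->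
  0 <= Cst -> Ku * Kv <= Cst ^ 2 ->
  Pn ^ c * sqrt (Ln * Pn ^ ka * (Ku * (Ln * Bn ^ ka / qR + 1)) * (Pn ^ b * qR * (Kv * (Bn ^ b / qR + 1))))
  <= 2 * Cst * Rmax (Ln * Rpower N (INR n / 2 + INR k / 2)) (Ln * N ^ n / sqrt qR).
Proof.
  intros HN HL Hq HqL Hka Hb Hc HP HB HKu HKv HC HK.
  assert (Hs : s = (ka + b)%nat) by lia.
  set (M := Rmax (N ^ (n + k)) (N ^ (2 * n) / qR)).
  assert (HM : 0 <= M). { unfold M. eapply Rle_trans; [|apply Rmax_l]. apply pow_le; lra. }
  assert (Hpc : 0 <= Pn ^ c) by (apply pow_le; lra).
  assert (H1 : (Pn ^ c) ^ 2 * (Ln * Pn ^ ka * (Ku * (Ln * Bn ^ ka / qR + 1)) * (Pn ^ b * qR * (Kv * (Bn ^ b / qR + 1))))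
     <= Ku * Kv * (N ^ (2 * c + s) * Ln * ((Ln * N ^ ka + qR) * (N ^ b + qR) / qR))).
  { replace ((Pn ^ c) ^ 2 * (Ln * Pn ^ ka * (Ku * (Ln * Bn ^ ka / qR + 1)) * (Pn ^ b * qR * (Kv * (Bn ^ b / qR + 1)))))
      with (Ku * Kv * (Pn ^ (2 * c + s) * Ln * ((Ln * Bn ^ ka + qR) * (Bn ^ b + qR) / qR)))
      by (rewrite Hs, !pow_add, <- pow_mult; rewrite (Nat.mul_comm 2 c), pow_mult; field; lra).
    apply Rmult_le_compat_l; [nra|].
    assert (Pn ^ (2 * c + s) <= N ^ (2 * c + s)) by (apply pow_incr; lra).
    assert (Bn ^ ka <= N ^ ka) by (apply pow_incr; lra).
    assert (Bn ^ b <= N ^ b) by (apply pow_incr; lra).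
    assert (0 <= Bn ^ ka) by (apply pow_le; lra). assert (0 <= Bn ^ b) by (apply pow_le; lra).
    assert (0 <= Pn ^ (2 * c + s)) by (apply pow_le; lra).
    assert (Hi : 0 < / qR) by (apply Rinv_0_lt_compat; lra).
    assert (A0 : 0 <= Ln * Bn ^ ka) by (apply Rmult_le_pos; lra).
    assert (A0' : Ln * Bn ^ ka <= Ln * N ^ ka) by (apply Rmult_le_compat_l; lra).
    assert (A1 : 0 <= (Ln * Bn ^ ka + qR) * (Bn ^ b + qR)) by (apply Rmult_le_pos; lra).
    assert (A2 : (Ln * Bn ^ ka + qR) * (Bn ^ b + qR) <= (Ln * N ^ ka + qR) * (N ^ b + qR)).
    { apply Rmult_le_compat; lra. }
    unfold Rdiv. apply Rmult_le_compat.
    - apply Rmult_le_pos; lra.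
    - apply Rmult_le_pos; lra.
    - apply Rmult_le_compat_r; lra.
    - apply Rmult_le_compat_r; lra. }
  pose proof (Y_bound N Ln qR n k s c ka b HN HL Hq HqL Hka Hb Hc) as H2. fold M in H2.
  assert (HKK : 0 <= Ku * Kv) by nra.
  assert (Hall : (Pn ^ c) ^ 2 * (Ln * Pn ^ ka * (Ku * (Ln * Bn ^ ka / qR + 1)) * (Pn ^ b * qR * (Kv * (Bn ^ b / qR + 1))))
      <= (2 * Cst * Ln) ^ 2 * M).
  { eapply Rle_trans; [apply H1|].
    eapply Rle_trans; [apply Rmult_le_compat_l; [apply HKK| apply H2]|].
    assert (0 <= Ln ^ 2 * M) by nra. nra. }
  assert (HX : 0 <= Ln * Pn ^ ka * (Ku * (Ln * Bn ^ ka / qR + 1)) * (Pn ^ b * qR * (Kv * (Bn ^ b / qR + 1)))).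
  { assert (0 <= Bn ^ ka) by (apply pow_le; lra). assert (0 <= Bn ^ b) by (apply pow_le; lra).
    assert (0 <= Pn ^ ka) by (apply pow_le; lra). assert (0 <= Pn ^ b) by (apply pow_le; lra).
    assert (0 <= Ln * Bn ^ ka / qR) by (unfold Rdiv; apply Rmult_le_pos; [nra|left; apply Rinv_0_lt_compat; lra]).
    assert (0 <= Bn ^ b / qR) by (unfold Rdiv; apply Rmult_le_pos; [nra|left; apply Rinv_0_lt_compat; lra]).
    repeat apply Rmult_le_pos; nra. }
  rewrite <- (sqrt_pow2 (Pn ^ c)) by auto. rewrite <- sqrt_mult by (auto; apply pow_le; auto).
  eapply Rle_trans. { apply sqrt_le_1_alt. apply Hall. }
  rewrite sqrt_mult by (try apply pow2_ge_0; auto). rewrite sqrt_pow2 by nra.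
  rewrite Rmult_assoc. apply Rmult_le_compat_l; [lra|].
  replace (Ln * N ^ n / sqrt qR) with (Ln * (N ^ n / sqrt qR)) by (unfold Rdiv; ring).
  rewrite RmaxRmult by lra. apply Rmult_le_compat_l; [lra|].
  unfold M. unfold Rmax at 1. destruct (Rle_dec (N ^ (n + k)) (N ^ (2 * n) / qR)).
  - eapply Rle_trans; [|apply Rmax_r]. right. rewrite sqrt_div_alt by lra. f_equal.
    replace (2 * n)%nat with (n * 2)%nat by lia. rewrite pow_mult. apply sqrt_pow2. apply pow_le; lra.
  - eapply Rle_trans; [|apply Rmax_l]. right. apply sqrt_pow_Rpower. lra.
Qed.


Lemma IZR_zprod_ge (S : list nat) (c : R) : 0 <= c -> (forall p, In p S -> c <= INR p) ->
  c ^ length S <= IZR (zprod S).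
Proof.
  intros Hc. induction S as [|p S IH]; intros H; unfold zprod in *; simpl; [lra|].
  rewrite mult_IZR, <- INR_IZR_INZ. assert (c <= INR p) by (apply H; left; auto).
  assert (c ^ length S <= IZR (fold_right Z.mul 1%Z (map Z.of_nat S))) by (apply IH; intros; apply H; right; auto).
  assert (0 <= c ^ length S) by (apply pow_le; auto). apply Rmult_le_compat; auto.
Qed.

Lemma S_bound (P : list nat) (N : R) (w : Z) (e : nat) :
  NoDup P -> (forall p, In p P -> prime (Z.of_nat p) /\ N / 2 <= INR p) -> 4 <= N ->
  (1 <= w)%Z -> IZR w <= N ^ e ->
  (length (filter (fun p => if Zdivide_dec (Z.of_nat p) w then true else false) P) <= 2 * e)%nat.
Proof.
  intros HP Hp HN Hw HwN.
  set (S := filter (fun p => if Zdivide_dec (Z.of_nat p) w then true else false) P).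
  assert (Hd : (zprod S | w)%Z).
  { apply zprod_div. apply NoDup_filter; auto. intros p Hin. unfold S in Hin. apply filter_In in Hin.
    destruct Hin as [Hin Hd]. split; [apply Hp; auto|].
    destruct (Zdivide_dec (Z.of_nat p) w); [auto|discriminate]. }
  apply Z.divide_pos_le in Hd; [|lia]. apply IZR_le in Hd.
  assert (H1 : (N / 2) ^ length S <= N ^ e).
  { eapply Rle_trans; [apply IZR_zprod_ge|]; [lra| |lra]. intros p Hin. unfold S in Hin.
    apply filter_In in Hin. apply Hp. tauto. }
  destruct (le_lt_dec (length S) (2 * e)) as [|Hlt]; auto. exfalso.
  assert (H2 : N ^ length S <= N ^ (2 * e)).
  { eapply Rle_trans with (((N / 2) ^ length S) ^ 2).
    - rewrite <- pow_mult. rewrite Nat.mul_comm, pow_mult. apply pow_incr. split; [lra|]. nra.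
    - rewrite (Nat.mul_comm 2 e), pow_mult. apply pow_incr. split; [apply pow_le; lra| auto]. }

  pose proof (Rlt_pow N (2 * e) (length S) ltac:(lra) Hlt). lra.
Qed.

Lemma K_nat (n k ka b : nat) : (1 <= n)%nat -> (ka <= k)%nat -> (ka + b <= n)%nat ->
  ((2 * (n + ka)) ^ ka * b ^ b <= (2 ^ (n + k) * n ^ n) ^ 2)%nat.
Proof.
  intros Hn Hka Hs.
  assert (H1 : ((2 * (n + ka)) ^ ka <= 4 ^ k * n ^ ka)%nat).
  { eapply Nat.le_trans. { apply Nat.pow_le_mono_l. instantiate (1 := (4 * n)%nat). lia. }
    rewrite Nat.pow_mul_l. apply Nat.mul_le_mono_r. apply Nat.pow_le_mono_r; lia. }
  assert (H2 : (b ^ b <= n ^ b)%nat) by (apply Nat.pow_le_mono_l; lia).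
  assert (H3 : (n ^ ka * n ^ b <= n ^ n)%nat) by (rewrite <- Nat.pow_add_r; apply Nat.pow_le_mono_r; lia).
  assert (H4 : (4 ^ k <= (2 ^ (n + k)) ^ 2)%nat).
  { rewrite <- Nat.pow_mul_r. replace 4%nat with (2 ^ 2)%nat by reflexivity. rewrite <- Nat.pow_mul_r.
    apply Nat.pow_le_mono_r; lia. }
  assert (H5 : (n ^ n <= (n ^ n) ^ 2)%nat).
  { assert (1 <= n ^ n)%nat by (apply Nat.pow_le_mono_l with (c := n) in Hn; rewrite Nat.pow_1_l in Hn; auto). set (x := (n ^ n)%nat) in *. rewrite Nat.pow_2_r. nia. }
  rewrite (Nat.pow_mul_l (2 ^ (n + k)) (n ^ n) 2).
  eapply Nat.le_trans. { apply Nat.mul_le_mono; [apply H1| apply H2]. }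
  rewrite <- Nat.mul_assoc. apply Nat.mul_le_mono; auto. lia.
Qed.


Lemma max_list_ge (P : list nat) p : In p P -> (p <= fold_right max 0%nat P)%nat.
Proof. induction P; simpl; intros H; [destruct H|]. destruct H as [<-|H]; [lia|]. specialize (IHP H). lia. Qed.

Lemma max_list_in (P : list nat) : fold_right max 0%nat P = 0%nat \/ In (fold_right max 0%nat P) P.
Proof. induction P; simpl; auto.
  destruct (Nat.max_spec a (fold_right max 0%nat P)) as [[_ E]|[_ E]]; rewrite E.
  - destruct IHP; auto.
  - auto. Qed.

Lemma len_le_max (P : list nat) : NoDup P -> (forall p, In p P -> (1 <= p)%nat) ->
  (length P <= fold_right max 0%nat P)%nat.
Proof.
  intros Hn H. rewrite <- (length_seq (fold_right max 0%nat P) 1). apply NoDup_incl_length; auto.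
  intros p Hp. apply in_seq. pose proof (max_list_ge P p Hp). pose proof (H p Hp). lia.
Qed.

Lemma perm_filter {X} (f : X -> bool) l : Permutation l (filter (fun x => negb (f x)) l ++ filter f l).
Proof.
  induction l; simpl; auto. destruct (f a); simpl.
  - eapply Permutation_trans; [apply perm_skip, IHl|]. apply Permutation_middle.
  - apply perm_skip. auto.
Qed.

Lemma sum_filter (f : nat -> bool) l :
  fold_right Nat.add 0%nat l = (fold_right Nat.add 0%nat (filter f l) + fold_right Nat.add 0%nat (filter (fun x => negb (f x)) l))%nat.
Proof. induction l; simpl; auto. destruct (f a); simpl; lia. Qed.

Lemma all_eq_repeat {X} (l : list X) c : (forall x, In x l -> x = c) -> l = repeat c (length l).
Proof. induction l; simpl; intros H; auto. rewrite (H a) by auto. rewrite IHl at 1; auto. Qed.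

Lemma sum_ge_twice (l : list nat) : (forall x, In x l -> (2 <= x)%nat) -> (2 * length l <= fold_right Nat.add 0%nat l)%nat.
Proof. induction l; simpl; intros H; auto. pose proof (H a (or_introl eq_refl)).
  assert (2 * length l <= fold_right Nat.add 0 l)%nat by (apply IHl; auto). lia. Qed.

Lemma sum_ones (l : list nat) : (forall x, In x l -> x = 1%nat) -> fold_right Nat.add 0%nat l = length l.
Proof. induction l; simpl; intros H; auto. rewrite (H a), IHl by auto; auto. Qed.

Lemma Tsum_tri P rs F G : cabs (Tsum P rs F) (Tsum P rs G) <= Tsum P rs (fun w => cabs (F w) (G w)).
Proof. unfold Tsum. apply (cabs_tri (fun x => F (monomial x rs)) (fun x => G (monomial x rs))). Qed.

Lemma Tsum_le_in P rs F G : (forall x, In x (tuples P (length rs)) -> F (monomial x rs) <= G (monomial x rs)) ->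
  Tsum P rs F <= Tsum P rs G.
Proof. intros H. unfold Tsum. apply rsum_le. auto. Qed.

Lemma Tsum_exchange {X} P rs (f : X -> Z -> R) ls :
  rsum (map (fun l => Tsum P rs (fun w => f l w)) ls) = Tsum P rs (fun w => rsum (map (fun l => f l w) ls)).
Proof. unfold Tsum. apply (rsum_exchange (fun l x => f l (monomial x rs))). Qed.

Lemma Tsum_const P rs K : Tsum P rs (fun _ => K) = INR (length P ^ length rs) * K.
Proof. unfold Tsum. rewrite rsum_const, length_tuples. reflexivity. Qed.

Lemma Tsum_ones P m F : Tsum P (repeat 1%nat m) F = rsum (map (fun x => F (zprod x)) (tuples P m)).
Proof. unfold Tsum. rewrite repeat_length. apply rsum_ext. intros x Hx. apply in_tuples in Hx.
  rewrite mono_ones; tauto. Qed.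

Theorem lemma2 :
  exists C : R, 0 < C /\
  forall (a q : Z) (n k L : nat) (N : R) (P : list nat) (rs : list nat),
    (1 <= q)%Z -> Z.gcd a q = 1%Z ->
    (0 < n)%nat -> (0 < k)%nat -> (0 < L)%nat -> 1 <= N ->
    INR L <= N ^ n ->
    IZR q <= INR L * N ^ k ->
    2 ^ (n + k + 1) < N ->
    (* P enumerates (without repetition) the primes in [N/2, N] not dividing q *)
    NoDup P ->
    (forall p : nat, In p P <->
       (prime (Z.of_nat p) /\ N / 2 <= INR p <= N /\ ~ (Z.of_nat p | q)%Z)) ->
    (* rs = [r_1; ...; r_m], with 1 <= m <= n, r_i >= 1, sum r_i = n *)
    (1 <= length rs <= n)%nat ->
    (forall r, In r rs -> (0 < r)%nat) ->
    fold_right Nat.add 0%nat rs = n ->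
    rsum (map (inner_sum_abs P rs a q) (seq 1 L))
      <= C * 2 ^ (n + k) * INR n ^ n *
         Rmax (INR L * Rpower N (INR n / 2 + INR k / 2))
              (INR L * N ^ n / sqrt (IZR q)).
Proof.
  exists 2. split; [lra|].
  intros a q n k L N P rs Hq Hg Hn Hk HL HN HLN HqL HN2 HPnd HPdef Hlen Hpos Hsum.
  assert (HN4 : 4 <= N).
  { assert (4 <= 2 ^ (n + k + 1)). { replace 4 with (2^2) by ring. apply Rle_pow; [lra|lia]. } lra. }
  set (Q := Z.to_nat q). assert (HqQ : q = Z.of_nat Q) by (unfold Q; lia).
  assert (HQ : (0 < Q)%nat) by lia.
  assert (HqR : IZR q = INR Q) by (rewrite HqQ, INR_IZR_INZ; auto).
  assert (HPp : forall p, In p P -> prime (Z.of_nat p) /\ N / 2 <= INR p /\ INR p <= N /\ ~ (Z.of_nat p | q)%Z).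
  { intros p Hp. apply HPdef in Hp. tauto. }
  assert (HPpr : forall p, In p P -> prime (Z.of_nat p)) by (intros; apply HPp; auto).
  assert (HP1 : forall p, In p P -> (1 <= p)%nat).
  { intros p Hp. pose proof (prime_ge_2 _ (HPpr p Hp)). lia. }
  set (Bm := fold_right max 0%nat P).
  assert (HBm : forall p, In p P -> (p <= Bm)%nat) by (intros; apply max_list_ge; auto).
  assert (HBN : INR Bm <= N).
  { destruct (max_list_in P) as [E|E]; fold Bm in E.
    - rewrite E. simpl. lra.
    - apply HPp in E. tauto. }
  assert (HPB : (length P <= Bm)%nat) by (apply len_le_max; auto).
  set (bigs := filter (fun r => negb (Nat.eqb r 1)) rs).
  set (ones := filter (fun r => Nat.eqb r 1) rs).
  set (s := length ones). set (c := length bigs).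
  set (ka := Nat.min k s). set (b := (s - ka)%nat).
  assert (Hones : ones = repeat 1%nat s).
  { apply all_eq_repeat; intros x Hx; unfold ones in Hx; apply filter_In in Hx; apply Nat.eqb_eq; tauto. }
  assert (Hperm : Permutation rs (bigs ++ (repeat 1%nat ka ++ repeat 1%nat b))).
  { rewrite <- repeat_app. replace (ka + b)%nat with s by lia. rewrite <- Hones. apply perm_filter. }
  assert (Hcs : (2 * c + s <= n)%nat).
  { rewrite <- Hsum. rewrite (sum_filter (fun r => Nat.eqb r 1) rs). fold ones. fold bigs.
    rewrite sum_ones. 2:{ intros x Hx. unfold ones in Hx. apply filter_In in Hx. apply Nat.eqb_eq; tauto. }
    assert (2 * c <= fold_right Nat.add 0%nat bigs)%nat.
    { apply sum_ge_twice. intros x Hx. unfold bigs in Hx. apply filter_In in Hx. destruct Hx as [Hx Hne].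
      pose proof (Hpos x Hx). destruct (Nat.eqb_spec x 1); simpl in Hne; [discriminate|]. lia. }
    fold s. lia. }
  set (Ta := tuples P ka). set (Tb := tuples P b).
  set (us := flat_map (fun x => map (fun l => (Z.of_nat l * zprod x)%Z) (seq 1 L)) Ta).
  set (vs := map zprod Tb).
  set (th := fun (l : nat) (w : Z) => 2 * PI * (IZR (Z.of_nat l * w * a) / IZR q)).
  assert (HT : forall F, Tsum P rs F = Tsum P bigs (fun wc => rsum (map (fun xa =>
            rsum (map (fun xb => F (wc * (zprod xa * zprod xb))%Z) Tb)) Ta))).
  { intros F. rewrite (Tsum_perm P _ _ Hperm), Tsum_app. apply Tsum_ext. intros wc.
    rewrite Tsum_app, Tsum_ones. apply rsum_ext. intros xa _. rewrite Tsum_ones. reflexivity. }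
  assert (Hl : forall l, inner_sum_abs P rs a q l <= Tsum P bigs (fun wc => rsum (map (fun xa =>
       cabs (rsum (map (fun xb => cos (th l (wc * (zprod xa * zprod xb))%Z)) Tb))
            (rsum (map (fun xb => sin (th l (wc * (zprod xa * zprod xb))%Z)) Tb))) Ta))).
  { intros l.
    replace (inner_sum_abs P rs a q l) with (cabs (Tsum P rs (fun w => cos (th l w))) (Tsum P rs (fun w => sin (th l w)))).
    2:{ unfold inner_sum_abs, abs_exp_sum, cabs, Tsum. rewrite !map_map. reflexivity. }
    rewrite !HT. eapply Rle_trans; [apply Tsum_tri|]. apply Tsum_le_in. intros x _.
    apply cabs_tri. }
  assert (Hstep : rsum (map (inner_sum_abs P rs a q) (seq 1 L)) <= Tsum P bigs (fun wc => BL Q (wc * a) us vs)).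
  { eapply Rle_trans; [apply rsum_le; intros l _; apply Hl|]. rewrite Tsum_exchange. right. apply Tsum_ext. intros wc.
    rewrite rsum_exchange. unfold BL, us. rewrite rsum_flat_map. apply rsum_ext. intros xa _.
    rewrite map_map. apply rsum_ext. intros l _. unfold vs. rewrite !map_map.
    assert (E : forall xb, th l (wc * (zprod xa * zprod xb))%Z = ang Q (wc * a) (Z.of_nat l * zprod xa) (zprod xb)).
    { intros xb. unfold th, ang. rewrite HqR. replace (Z.of_nat l * (wc * (zprod xa * zprod xb)) * a)%Z with (Z.of_nat l * zprod xa * zprod xb * (wc * a))%Z by ring. reflexivity. }
    f_equal; apply rsum_ext; intros xb _; rewrite E; reflexivity. }
  set (Ru := (L * Bm ^ ka)%nat). set (Rv := (Bm ^ b)%nat).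
  set (Ku := ((2 * (n + ka)) ^ ka)%nat). set (Kv := (b ^ b)%nat).
  assert (HzB : forall x m, In x (tuples P m) -> (1 <= zprod x <= Z.of_nat Bm ^ Z.of_nat m)%Z).
  { intros x m Hx. apply in_tuples in Hx. destruct Hx as [Hlx Hx]. rewrite <- Hlx.
    apply zprod_bounds. intros p Hp. split; [apply HP1| apply HBm]; auto. }
  assert (Hus : forall x, In x us -> (1 <= x <= Z.of_nat Ru)%Z).
  { intros x Hx. unfold us in Hx. apply in_flat_map in Hx. destruct Hx as [xa [Hxa Hx]].
    apply in_map_iff in Hx. destruct Hx as [l [<- Hl']]. apply in_seq in Hl'.
    pose proof (HzB xa ka Hxa). unfold Ru. rewrite Nat2Z.inj_mul, Nat2Z.inj_pow. nia. }
  assert (HKu : forall w, (length (filter (Z.eqb w) us) <= Ku)%nat).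
  { intros w. destruct (filter (Z.eqb w) us) as [|u0 rest] eqn:Ef; [simpl; lia|].
    assert (Hu0 : In u0 (filter (Z.eqb w) us)) by (rewrite Ef; left; auto).
    apply filter_In in Hu0. destruct Hu0 as [Hu0 Hwu]. apply Z.eqb_eq in Hwu. subst u0.
    pose proof (Hus w Hu0) as Hwr. rewrite <- Ef.
    eapply Nat.le_trans. { apply Ku_bound; auto. }
    unfold Ku. apply Nat.pow_le_mono_l. apply S_bound with N; auto.
    - intros p Hp. split; apply HPp; auto.
    - lia.
    - eapply Rle_trans. { apply IZR_le. apply Hwr. }
      rewrite <- INR_IZR_INZ. unfold Ru. rewrite mult_INR, pow_INR, pow_add.
      apply Rmult_le_compat; auto using pos_INR. apply pow_le; apply pos_INR.
      apply pow_incr. split; auto using pos_INR. }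
  assert (Hvs : forall x, In x vs -> (1 <= x <= Z.of_nat Rv)%Z).
  { intros x Hx. unfold vs in Hx. apply in_map_iff in Hx. destruct Hx as [xb [<- Hxb]].
    pose proof (HzB xb b Hxb). unfold Rv. rewrite Nat2Z.inj_pow. lia. }
  assert (HKv : forall w, (length (filter (Z.eqb w) vs) <= Kv)%nat).
  { intros w. apply Kv_bound; auto. }
  assert (Hrel : forall x, In x (tuples P (length bigs)) -> rel_prime (monomial x bigs * a) (Z.of_nat Q)).
  { intros x Hx. rewrite <- HqQ. apply rel_prime_sym. apply rel_prime_mult.
    - apply rel_prime_sym. apply relprime_mono. intros p Hp. apply in_tuples in Hx. destruct Hx as [_ Hx].
      specialize (HPp p (Hx p Hp)). tauto.
    - apply rel_prime_sym. apply Zgcd_1_rel_prime. auto. }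
  set (X := INR (length us) * (INR Ku * (INR Ru / INR Q + 1)) * (INR (length vs) * INR Q * (INR Kv * (INR Rv / INR Q + 1)))).
  eapply Rle_trans; [apply Hstep|].
  eapply Rle_trans. { apply Tsum_le_in with (G := fun _ => sqrt X). intros x Hx.
    apply (bilinear Q _ HQ (Hrel x Hx) us vs Ru Rv Ku Kv); auto. }
  rewrite Tsum_const. fold c.
  assert (Hlus : length us = (length P ^ ka * L)%nat).
  { unfold us, Ta. rewrite <- length_tuples. generalize (tuples P ka). intros T. induction T; simpl; auto.
    rewrite length_app, length_map, length_seq, IHT. lia. }
  assert (Hlvs : length vs = (length P ^ b)%nat) by (unfold vs, Tb; rewrite length_map, length_tuples; auto).
  assert (HX : X = INR L * INR (length P) ^ ka * (INR Ku * (INR L * INR Bm ^ ka / INR Q + 1)) *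
       (INR (length P) ^ b * INR Q * (INR Kv * (INR Bm ^ b / INR Q + 1)))).
  { unfold X. rewrite Hlus, Hlvs. unfold Ru, Rv. rewrite !mult_INR, !pow_INR. ring. }
  rewrite HX, pow_INR, HqR.
  assert (HL1 : 1 <= INR L) by (apply (le_INR 1); lia).
  assert (HQ1 : 1 <= INR Q) by (apply (le_INR 1); lia).
  assert (HqL' : INR Q <= INR L * N ^ k) by (rewrite <- HqR; auto).
  assert (HPn : 0 <= INR (length P) <= N) by (split; [apply pos_INR| eapply Rle_trans; [apply le_INR; apply HPB| auto]]).
  assert (HBn : 0 <= INR Bm <= N) by (split; [apply pos_INR| auto]).
  assert (HKK : INR Ku * INR Kv <= (2 ^ (n + k) * INR n ^ n) ^ 2).
  { rewrite <- mult_INR. replace (2 ^ (n + k) * INR n ^ n) with (INR (2 ^ (n + k) * n ^ n)).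
    2:{ rewrite mult_INR, !pow_INR. reflexivity. }
    rewrite <- pow_INR. apply le_INR. unfold Ku, Kv. apply K_nat; lia. }
  assert (HC0 : 0 <= 2 ^ (n + k) * INR n ^ n) by (apply Rmult_le_pos; apply pow_le; [lra| apply pos_INR]).
  pose proof (final_real N (INR L) (INR Q) (INR (length P)) (INR Bm) (INR Ku) (INR Kv) (2 ^ (n + k) * INR n ^ n)
     n k s c ka b HN HL1 HQ1 HqL' eq_refl eq_refl Hcs HPn HBn (pos_INR _) (pos_INR _) HC0 HKK) as Hfin.
  eapply Rle_trans; [apply Hfin|]. right. ring.
Qed.
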